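(* Let $A\subset\mathbb{Z}$ be a set with $\dim(A)=1$ and cardinality $k$ that is composed of $s\le k-1$ pairwise disjoint segments $P_1,\dots,P_s$ with $\max P_i<\min P_{i+1}$ for $1\le i<s$. Suppose that every finite set $B\subset\mathbb{Z}$ with $\dim(B)=1$ whose minimum number of disjoint segments in a decomposition is $s-1\le |B|-1$ satisfies $\mathrm{vol}(B)\le 2^{s-2}(|B|-s+1)+1$. If $\mathrm{vol}(A)>2^{s-1}(|A|-s)+1$, then $P_i+P_j<P_i+P_{j+1}$ (i.e. every element of $P_i+P_j$ is smaller than every element of $P_i+P_{j+1}$) for all $1\le i\le s$ and $1\le j<s$.
   Context: A segment is a nonempty set of consecutive integers. Sets $A\subset G$, $B\subset G'$ in abelian groups are Freiman isomorphic of order 2 ($F_2$-isomorphic) if there is a bijection $\phi:A\to B$ with $x+y=z+t\iff\phi(x)+\phi(y)=\phi(z)+\phi(t)$ for all $x,y,z,t\in A$. The dimension $\dim(A)$ is the largest $d$ such that some $B\subset\mathbb{Z}^d$ not contained in a hyperplane is $F_2$-isomorphic to $A$. For a $1$-dimensional $A\subset\mathbb{Z}$, $\mathrm{vol}(A)=\max(\tilde A)+1$ where $\tilde A=(A-\min A)/\gcd(A-\min A)$ (in general the volume is the minimum number of lattice points in the convex hull of a $d$-dimensional $F_2$-isomorphic copy). *)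

(* Defs.v *)
From HB Require Import structures.
From mathcomp Require Import all_boot all_order all_algebra.
From mathcomp Require Import finmap.
Set Implicit Arguments. Unset Strict Implicit. Unset Printing Implicit Defensive.
Import Order.TTheory GRing.Theory Num.Theory.
Local Open Scope ring_scope.


Definition dotz (d : nat) (u v : 'rV[int]_d) : int := \sum_(i < d) u 0 i * v 0 i.

Definition F2_iso_on (d : nat) (A : {fset int}) (phi : int -> 'rV[int]_d) : Prop :=
  {in A &, injective phi} /\
  (forall x y z t, x \in A -> y \in A -> z \in A -> t \in A ->
     (x + y = z + t <-> phi x + phi y = phi z + phi t)).

Definition in_hyperplane (d : nat) (A : {fset int}) (phi : int -> 'rV[int]_d) : Prop :=
  exists (a : 'rV[int]_d) (c : int), a != 0 /\ forall x, x \in A -> dotz a (phi x) = c.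

Definition realizable_in_dim (A : {fset int}) (d : nat) : Prop :=
  exists phi : int -> 'rV[int]_d, F2_iso_on A phi /\ ~ in_hyperplane A phi.

Definition dim_is_one (A : {fset int}) : Prop :=
  realizable_in_dim A 1 /\ forall d : nat, (1 < d)%N -> ~ realizable_in_dim A d.

Definition fmin (A : {fset int}) : int := \big[Num.min/head 0 (A : seq int)]_(a <- A) a.
Definition fmax (A : {fset int}) : int := \big[Num.max/head 0 (A : seq int)]_(a <- A) a.

(* vol(A) = max(Atilde) + 1, Atilde = (A - min A) / gcd(A - min A), for 1-dim A *)
Definition vol1 (A : {fset int}) : int :=
  let g := \big[gcdz/0]_(a <- A) (a - fmin A) in
  ((fmax A - fmin A) %/ g)%Z + 1.

Definition seg_decomp (A : {fset int}) (s : nat) (lo hi : nat -> int) : Prop :=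
  (forall i, (i < s)%N -> lo i <= hi i) /\
  (forall i, (i.+1 < s)%N -> hi i < lo i.+1) /\
  (forall x : int, x \in A <-> exists2 i, (i < s)%N & lo i <= x <= hi i).

Definition min_nseg (A : {fset int}) (s : nat) : Prop :=
  (exists lo hi, seg_decomp A s lo hi) /\
  forall t lo hi, seg_decomp A t lo hi -> (s <= t)%N.

(* Main.v *)
Require Import Defs.
From HB Require Import structures.
From mathcomp Require Import all_boot all_order all_algebra.
From mathcomp Require Import finmap zify ring lra.
Import Order.TTheory GRing.Theory Num.Theory.
Set Implicit Arguments. Unset Strict Implicit.
Local Open Scope ring_scope.

Lemma bigmax_prop (s : seq int) (idx : int) :
  let r := \big[Num.max/idx]_(a <- s) a in
  (r = idx \/ r \in s) /\ (forall a, a \in s -> a <= r).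
Proof.
elim: s => [|b s [IH1 IH2]]; rewrite ?big_nil ?big_cons /=.
  by split; [left | move=> a; rewrite in_nil].
set r := \big[_/_]_(_ <- _) _ in IH1 IH2 *.
case: (leP b r) => h.
- split.
    by case: IH1 => [->|H]; [left|right; rewrite in_cons H orbT].
  move=> a; rewrite in_cons => /orP[/eqP->//|]; exact: IH2.
- split; first by right; rewrite mem_head.
  move=> a; rewrite in_cons => /orP[/eqP->//|/IH2 H]; exact: (le_trans H (ltW h)).
Qed.

Lemma bigmin_prop (s : seq int) (idx : int) :
  let r := \big[Num.min/idx]_(a <- s) a in
  (r = idx \/ r \in s) /\ (forall a, a \in s -> r <= a).
Proof.
elim: s => [|b s [IH1 IH2]]; rewrite ?big_nil ?big_cons /=.
  by split; [left | move=> a; rewrite in_nil].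
set r := \big[_/_]_(_ <- _) _ in IH1 IH2 *.
case: (leP b r) => h.
- split; first by right; rewrite mem_head.
  move=> a; rewrite in_cons => /orP[/eqP->//|/IH2 H]; exact: (le_trans h H).
- split.
    by case: IH1 => [->|H]; [left|right; rewrite in_cons H orbT].
  move=> a; rewrite in_cons => /orP[/eqP->|]; [exact: ltW|exact: IH2].
Qed.

Lemma fmax_P (A : {fset int}) x : x \in A ->
  fmax A \in A /\ forall y, y \in A -> y <= fmax A.
Proof.
rewrite /fmax => xA.
have [H1 H2] := bigmax_prop (A : seq int) (head 0 (A : seq int)).
split => //; case: H1 => [->|//].
have memE : forall y, (y \in A) = (y \in (A : seq int)) by [].
rewrite memE; move: xA; rewrite memE.
case: (enum_fset A) => //= a t _; by rewrite mem_head.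
Qed.

Lemma fmin_P (A : {fset int}) x : x \in A ->
  fmin A \in A /\ forall y, y \in A -> fmin A <= y.
Proof.
rewrite /fmin => xA.
have [H1 H2] := bigmin_prop (A : seq int) (head 0 (A : seq int)).
split => //; case: H1 => [->|//].
have memE : forall y, (y \in A) = (y \in (A : seq int)) by [].
rewrite memE; move: xA; rewrite memE.
case: (enum_fset A) => //= a t _; by rewrite mem_head.
Qed.

Lemma bgcd_dvd (s : seq int) (F : int -> int) a : a \in s ->
  (\big[gcdz/0]_(b <- s) F b %| F a)%Z.
Proof.
elim: s => [//|b s IH]; rewrite in_cons big_cons => /orP[/eqP->|/IH H].
  exact: dvdz_gcdl.
exact: dvdz_trans (dvdz_gcdr _ _) H.
Qed.

Lemma vol1E (X : {fset int}) a : a \in X -> a + 1 \in X ->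
  vol1 X = fmax X - fmin X + 1.
Proof.
move=> aX a1X; rewrite /vol1.
set g := \big[gcdz/0]_(b <- X) (b - fmin X).
have d1 := @bgcd_dvd _ (fun b => b - fmin X) _ aX.
have d2 := @bgcd_dvd _ (fun b => b - fmin X) _ a1X.
have g1 : (g %| 1)%Z.
  have -> : (1 = (a + 1 - fmin X) - (a - fmin X) :> int) by lia.
  exact: rpredB.
have -> : g = 1.
  have memE : forall y, (y \in X) = (y \in (X : seq int)) by [].
  move: g1; rewrite /g; move: aX; rewrite memE.
  case: (enum_fset X) => [//|b t] _; rewrite big_cons dvdz1 /gcdz.
  by move/eqP; rewrite absz_nat => ->.
by rewrite divz1.
Qed.

Lemma seg_lt s (lo hi : nat -> int) :
  (forall i, (i < s)%N -> lo i <= hi i) ->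
  (forall i, (i.+1 < s)%N -> hi i < lo i.+1) ->
  forall k l, (k < l)%N -> (l < s)%N -> hi k < lo l.
Proof.
move=> H1 H2 k; elim=> [//|l IH] kl ls.
have h2 := H2 l ls.
case: (ltngtP k l) => c.
- have := IH c (ltnW ls); have := H1 l (ltnW ls); lia.
- lia.
- by rewrite c.
Qed.

Lemma merge_decomp X Y s lo hi k : seg_decomp X s lo hi -> (k.+1 < s)%N ->
  (forall x, x \in Y <-> x \in X \/ hi k < x < lo k.+1) ->
  seg_decomp Y s.-1 (fun i => if (i <= k)%N then lo i else lo i.+1)
                  (fun i => if (i < k)%N then hi i else hi i.+1).
Proof.
move=> [H1 [H2 H3]] ks HY.
have hk := H2 k ks.
have lt := seg_lt H1 H2.
split; [|split].
- move=> i iS; case: (ltngtP i k) => c.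
  + apply: H1; lia.
  + apply: H1; lia.
  + subst i; have := H1 k (ltnW ks); have := H1 k.+1 ks; lia.
- move=> i iS; case: (ltngtP i k) => c.
  + apply: H2; lia.
  + apply: H2; lia.
  + subst i; apply: H2; lia.
- move=> x; rewrite HY H3; split.
  + case; last first.
      move=> /andP[hx1 hx2]; exists k; first lia.
      rewrite leqnn ltnn; have := H1 k (ltnW ks); have := H1 k.+1 ks; lia.
    case=> l ls /andP[hl1 hl2].
    case: (ltngtP l k) => c.
    * by exists l; [lia| rewrite (ltnW c) c hl1 hl2].
    * case: l c ls hl1 hl2 => [//|l] c ls hl1 hl2.
      case: (ltngtP l k) => c'.
      -- lia.
      -- exists l; first lia. by rewrite leqNgt c' ltnNge (ltnW c') /= hl1 hl2.
      -- subst l; exists k; first lia.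
         rewrite leqnn ltnn hl2 andbT.
         have := H1 k (ltnW ks); lia.
    * subst l; exists k; first lia.
      rewrite leqnn ltnn hl1 /=.
      have := H1 k.+1 ks; lia.
  + case=> i iS; case: (ltngtP i k) => c /andP[h1 h2].
    * by left; exists i; [lia|rewrite h1 h2].
    * by left; exists i.+1; [lia|rewrite h1 h2].
    * subst i; case: (lerP x (hi k)) => hx.
      -- by left; exists k; [lia|rewrite h1 hx].
      -- case: (lerP (lo k.+1) x) => hx'.
         ++ by left; exists k.+1; [lia|rewrite h2 hx'].
         ++ right; lia.
Qed.

Lemma seg_gap A s lo hi : seg_decomp A s lo hi -> min_nseg A s ->
  forall k, (k.+1 < s)%N -> hi k + 1 < lo k.+1.
Proof.
move=> D [_ Hmin] k ks.
rewrite ltNge; apply/negP => hle.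
have [H1 [H2 H3]] := D.
have hk := H2 k ks.
have := Hmin _ _ _ (@merge_decomp A A s lo hi k D ks _).
move=> /(_ _) H.
suff : (s <= s.-1)%N by lia.
apply: H => x; split; [by left|case=> // ?; lia].
Qed.

Lemma hi_notin A s lo hi : seg_decomp A s lo hi ->
  (forall k, (k.+1 < s)%N -> hi k + 1 < lo k.+1) ->
  forall l, (l < s)%N -> hi l + 1 \notin A.
Proof.
move=> [H1 [H2 H3]] G l ls; apply/negP; rewrite H3 => -[k ks /andP[a b]].
have lt := seg_lt H1 H2.
case: (ltngtP k l) => c.
- have := lt k l c ls; have := H1 l ls; lia.
- have g := G l (leq_ltn_trans c ks).
  case: (ltngtP l.+1 k) => c'.
  + have := lt l.+1 k c' ks; have := H1 l.+1 (leq_ltn_trans c ks); lia.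
  + lia.
  + subst k; lia.
- subst k; lia.
Qed.

Lemma count_ends X t lo2 hi2 (S : seq int) : seg_decomp X t lo2 hi2 -> uniq S ->
  (forall z, z \in S -> z \in X /\ z + 1 \notin X) -> (size S <= t)%N.
Proof.
move=> [H1 [H2 H3]] uS HS.
rewrite -(size_iota 0 t) -(size_map hi2).
apply: uniq_leq_size => // z /HS [zX zn].
move: (zX); rewrite H3 => -[l lt /andP[a b]].
apply/mapP; exists l; first by rewrite mem_iota.
case: (lerP (hi2 l) z) => c; first lia.
move/negP: zn; case; apply/H3; exists l => //; lia.
Qed.

Lemma inc_uniq (f : nat -> int) n : (forall a b, (a < b)%N -> (b < n)%N -> f a < f b) ->
  uniq (map f (iota 0 n)).
Proof.
move=> Hf; rewrite map_inj_in_uniq ?iota_uniq // => a b; rewrite !mem_iota => ha hb.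
case: (ltngtP a b) => c //.
- have := Hf a b c ltac:(lia); lia.
- have := Hf b a c ltac:(lia); lia.
Qed.

Lemma dotzD d (a u v : 'rV[int]_d) : dotz a (u + v) = dotz a u + dotz a v.
Proof. by rewrite /dotz -big_split; apply: eq_bigr => k _; rewrite mxE mulrDr. Qed.

Unset Implicit Arguments.

(* Segments are indexed 0..s-1 (paper: 1..s); P_i = [lo i, hi i]. *)
Theorem lemma3p1 (A : {fset int}) (s : nat) (lo hi : nat -> int) :
  dim_is_one A ->
  seg_decomp A s lo hi ->
  min_nseg A s ->
  (s <= #|`A|%fset - 1)%N ->
  (forall B : {fset int}, dim_is_one B -> min_nseg B s.-1 ->
     (s%:Z - 1 <= #|`B|%fset%:Z - 1) ->
     (vol1 B)%:~R <= (2%:Q ^ (s%:Z - 2)) * (#|`B|%fset%:Q - s%:Q + 1) + 1) ->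
  (vol1 A)%:~R > (2%:Q ^ (s%:Z - 1)) * (#|`A|%fset%:Q - s%:Q) + 1 ->
  forall i j, (i < s)%N -> (j.+1 < s)%N ->
    forall x y u v : int,
      lo i <= x <= hi i -> lo j <= u <= hi j ->
      lo i <= y <= hi i -> lo j.+1 <= v <= hi j.+1 ->
      x + u < y + v.
Proof.
move=> dimA D minA hsA hB hvol i j iS jS x y u v
  /andP[hx1 hx2] /andP[hu1 hu2] /andP[hy1 hy2] /andP[hv1 hv2].
have [H1 [H2 H3]] := D.
have lt := seg_lt H1 H2.
have gap := seg_gap D minA.
rewrite ltNge; apply/negP => hle.
have hg : lo j.+1 - hi j <= hi i - lo i by lia.
have gj := gap j jS.
have inA : forall k z, (k < s)%N -> lo k <= z <= hi k -> z \in A.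
  by move=> k z ks hz; apply/H3; exists k.
have hlt : forall k l, (k < l)%N -> (l < s)%N -> hi k < hi l.
  move=> k l kl ls; have := lt k l kl ls; have := H1 l ls; lia.
set m := absz ((lo j.+1 - hi j - 1)%R).
have mE : m%:Z = lo j.+1 - hi j - 1 by rewrite /m; lia.
set Gs := [seq hi j + 1 + n%:Z | n <- iota 0 m].
have memG : forall z, (z \in Gs) = (hi j < z < lo j.+1).
  move=> z; apply/mapP/idP => [[n]|hz].
    rewrite mem_iota => /andP[_ nm] ->; lia.
  exists (absz ((z - hi j - 1)%R)); [rewrite mem_iota; lia | lia].
set B := [fset z in (A : seq int) ++ Gs]%fset.
have memB : forall z, (z \in B) = (z \in A) || (z \in Gs).
  by move=> z; rewrite !inE.
have AB : forall z, z \in A -> z \in B by move=> z zA; rewrite memB zA.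
have cardB : (#|`B| <= #|`A| + m)%N.
  rewrite card_fseq; apply: leq_trans (size_undup _) _.
  by rewrite size_cat size_map size_iota.
have cardAB : (#|`A| <= #|`B|)%N.
  by apply: fsubset_leq_card; apply/fsubsetP => z; exact: AB.
have cardA : (m + s + 1 <= #|`A|)%N.
  set L1 := map lo (iota 0 i).
  set L2 := map (fun n => lo i + n%:Z) (iota 0 m.+2).
  set L3 := map (fun k => lo (i.+1 + k)%N) (iota 0 (s - i.+1)).
  have F1 : forall z, z \in L1 -> z \in A /\ z < lo i.
    move=> z /mapP[k]; rewrite mem_iota => /andP[_ ki] ->; split.
      apply: (inA k); [lia|]; have := H1 k ltac:(lia); lia.
    have := lt k i ki iS; have := H1 k ltac:(lia); lia.
  have F2 : forall z, z \in L2 -> z \in A /\ lo i <= z <= hi i.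
    move=> z /mapP[n]; rewrite mem_iota => /andP[_ nm] ->.
    suff h : lo i <= lo i + n%:Z <= hi i by split => //; exact: (inA i).
    lia.
  have F3 : forall z, z \in L3 -> z \in A /\ hi i < z.
    move=> z /mapP[k]; rewrite mem_iota => /andP[_ ks] ->; split.
      apply: (inA (i.+1 + k)%N); [lia|]; have := H1 (i.+1 + k)%N ltac:(lia); lia.
    apply: lt; lia.
  have u1 : uniq L1.
    apply: inc_uniq => a b ab bi; have := lt a b ab ltac:(lia); have := H1 a ltac:(lia); lia.
  have u2 : uniq L2 by apply: inc_uniq => a b ab _; lia.
  have u3 : uniq L3.
    apply: inc_uniq => a b ab bi.
    have := lt (i.+1 + a)%N (i.+1 + b)%N ltac:(lia) ltac:(lia).
    have := H1 (i.+1 + a)%N ltac:(lia); lia.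
  have uS : uniq (L1 ++ L2 ++ L3).
    have h1 : ~~ has (mem L1) (L2 ++ L3).
      apply/hasPn => z; rewrite mem_cat => /orP[/F2[_ h]|/F3[_ h]];
        apply/negP => /F1[_ h']; lia.
    have h2 : ~~ has (mem L2) L3.
      apply/hasPn => z /F3[_ h]; apply/negP => /F2[_ h']; lia.
    by rewrite !cat_uniq u1 u2 u3 h1 h2.
  have := @uniq_leq_size _ (L1 ++ L2 ++ L3) (A : seq int) uS.
  rewrite !size_cat !size_map !size_iota => /(_ _) H.
  have : (i + (m.+2 + (s - i.+1)) <= #|`A|)%N.
    apply: H => z; rewrite !mem_cat => /orP[/F1[]//|/orP[/F2[]//|/F3[]//]].
  lia.
have loiA : lo i \in A by apply: (inA i) => //; lia.
have loi1A : lo i + 1 \in A by apply: (inA i) => //; lia.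
have hjA : hi j \in A by apply: (inA j); [lia|]; have := H1 j ltac:(lia); lia.
have volAB : vol1 A <= vol1 B.
  rewrite (vol1E loiA loi1A) (vol1E (AB _ loiA) (AB _ loi1A)).
  have [mxA _] := fmax_P loiA.
  have [_ mxB] := fmax_P (AB _ loiA).
  have [mnA _] := fmin_P loiA.
  have [_ mnB] := fmin_P (AB _ loiA).
  have := mxB _ (AB _ mxA); have := mnB _ (AB _ mnA); lia.
have dimB : dim_is_one B.
  split.
  - exists (fun z => \row_(_ < 1) z); split; first split.
    + move=> a b _ _ /(congr1 (fun M : 'rV[int]_1 => M 0 0)); by rewrite !mxE.
    + move=> a b c e _ _ _ _; split.
        by move=> E; apply/matrixP => p q; rewrite !mxE E.
      by move/(congr1 (fun M : 'rV[int]_1 => M 0 0)); rewrite !mxE.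
    + move=> [a [c [a0 Ha]]].
      have e1 := Ha (hi j) (AB _ hjA).
      have ljA : lo j.+1 \in A by apply: (inA j.+1) => //; have := H1 j.+1 jS; lia.
      have e2 := Ha (lo j.+1) (AB _ ljA).
      rewrite /dotz big_ord1 !mxE in e1; rewrite /dotz big_ord1 !mxE in e2.
      have a00 : a 0 ord0 != 0.
        apply: contra a0 => /eqP h; apply/eqP/matrixP => p q.
        by rewrite (ord1 p) (ord1 q) mxE h.
      have := mulfI a00 (etrans e1 (esym e2)); lia.
  - move=> d hd [phi [[inj F2] nh]]; apply: (dimA.2 d hd).
    exists phi; split; first split.
    + move=> a b aA bA; apply: inj; exact: AB.
    + move=> a b c e aA bA cA eA; apply: F2; exact: AB.
    + move=> [a [c [a0 Ha]]]; apply: nh; exists a, c; split => // z.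
      rewrite memB => /orP[/Ha//|]; rewrite memG => hz.
      set w := lo i + (z - hi j).
      have wA : w \in A by apply: (inA i) => //; rewrite /w; lia.
      have E : z + lo i = w + hi j by rewrite /w; lia.
      have zB : z \in B by rewrite memB memG hz orbT.
      have := (F2 z (lo i) w (hi j) zB (AB _ loiA) (AB _ wA) (AB _ hjA)).1 E.
      move/(congr1 (dotz a)); rewrite !dotzD (Ha _ wA) (Ha _ hjA) (Ha _ loiA).
      lia.
have minB : min_nseg B s.-1.
  have HB : forall z, z \in B <-> z \in A \/ hi j < z < lo j.+1.
    by move=> z; rewrite memB memG; split => /orP.
  split.
    by eexists; eexists; exact: (merge_decomp D jS HB).
  move=> t lo2 hi2 D2.
  set hiB := fun k => if (k < j)%N then hi k else hi k.+1.
  have := @count_ends B t lo2 hi2 (map hiB (iota 0 s.-1)) D2.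
  rewrite size_map size_iota; apply.
    apply: inc_uniq => a b ab bs; rewrite /hiB.
    case: ifP => c1; case: ifP => c2; apply: hlt; lia.
  move=> z /mapP[k]; rewrite mem_iota => /andP[_ ks] ->; rewrite /hiB.
  have hn := hi_notin D gap.
  case: ifP => c; split.
  - apply: AB; apply: (inA k); [lia|]; have := H1 k ltac:(lia); lia.
  - rewrite memB negb_or hn /=; last lia.
    rewrite memG; have := hlt k j ltac:(lia) ltac:(lia); lia.
  - apply: AB; apply: (inA k.+1); [lia|]; have := H1 k.+1 ltac:(lia); lia.
  - rewrite memB negb_or hn /=; last lia.
    rewrite memG; have := H1 j.+1 jS.
    case: (ltngtP j k) => c'.
    + have := hlt j.+1 k.+1 ltac:(lia) ltac:(lia); lia.
    + lia.
    + subst k; lia.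
have hcard : s%:Z - 1 <= #|`B|%:Z - 1 by lia.
have := hB B dimB minB hcard.
move: hvol.
case: s iS jS hsA minB hcard cardA {lt gap inA hlt H1 H2 H3 D minA hB} => [//|[//|s']] iS jS hsA _ _ cardA.
have -> : (s'.+2)%:Z - 2 = s'%:Z by lia.
have -> : (s'.+2)%:Z - 1 = s'%:Z + 1 by lia.
rewrite expfzDr // expr1z.
set p := 2%:Q ^ s'%:Z.
have p0 : 0 < p by apply: exprz_gt0.
set a := #|`A|%fset; set b := #|`B|%fset.
have f1 : (b%:Q <= a%:Q + m%:Q) by rewrite -intrD ler_int; lia.
have f2 : (m%:Q + (s'.+2)%:Q + 1 <= a%:Q).
  by rewrite -[1]/((1:int)%:~R) -!intrD ler_int; lia.
have f3 : ((vol1 A)%:~R <= (vol1 B)%:~R :> rat) by rewrite ler_int.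
move=> h1 h2.
have key : 0 <= p * ((2 * a%:Q - 2 * (s'.+2)%:Q) - (b%:Q - (s'.+2)%:Q + 1)).
  by apply: mulr_ge0; [exact: ltW | lra].
rewrite (_ : 2%:Q = 2) // in h1.
have := lt_le_trans h1 (le_trans f3 h2).
move: key; clear.
move: (p) (a%:~R : rat) (b%:~R : rat) ((s'.+2)%:~R : rat) => P AA BB SS.
move=> k1 k2.
have E1 : P * (2 * AA - 2 * SS - (BB - SS + 1)) = P*2*(AA-SS) - P*(BB-SS+1) by ring.
rewrite E1 subr_ge0 in k1; rewrite ltrD2r in k2.
by have := lt_le_trans k2 k1; rewrite ltxx.
Qed.
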